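(* Let $G=(V,E)$ be an undirected graph that is a pseudo-clique of size $n\ge 3$ and cardinality $k\ge 0$. Then the tree width of $G$ is $n-1$.
   Context: An undirected graph $G=(V,E)$ is a pseudo-clique if $V$ can be partitioned into a set $V_{\mathit{main}}$ of main-nodes and, for each pair $u\neq v$ of main-nodes, a set $V_{u,v}$ of edge-nodes, such that for each such pair, writing $V_{u,v}=\{v_1,\dots,v_m\}$, the edges $(u,v_1),(v_1,v_2),\dots,(v_{m-1},v_m),(v_m,v)$ are present (so $u,v_1,\dots,v_m,v$ is a simple path from $u$ to $v$), and no other edges are present. The size of the pseudo-clique is $|V_{\mathit{main}}|$, and its cardinality is $\max_{u\neq v\in V_{\mathit{main}}}|V_{u,v}|$. *)

(* Defs.v *)
From mathcomp Require Import all_boot.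
Set Implicit Arguments. Unset Strict Implicit. Unset Printing Implicit Defensive.

(* A (finite, simple, undirected) graph is a symmetric irreflexive relation
   e : rel T on a finType T. *)

Definition path_edge (T : eqType) (u v : T) (p : seq T) (x y : T) : bool :=
  let s := u :: rcons p v in (x, y) \in zip s (behead s).

(* G = (T, e) is a pseudo-clique of size n and cardinality k, witnessed by
   the set of main-nodes Vmain and, for each pair u <> v of main nodes, the
   sequence f u v = [v_1; ...; v_m] of edge-nodes V_{u,v} (listed in the order
   of the path from u to v; f v u is the same set listed from v to u). *)
Definition pseudo_clique (T : finType) (e : rel T) (n k : nat) : Prop :=
  exists (Vmain : {set T}) (f : T -> T -> seq T),
  #|Vmain| = n /\
      (forall u v, u \in Vmain -> v \in Vmain -> u != v -> f v u = rev (f u v)) /\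
      (forall u v, u \in Vmain -> v \in Vmain -> u != v ->
         uniq (f u v) /\ (forall x, x \in f u v -> x \notin Vmain)) /\
      (forall u v u' v' x, u \in Vmain -> v \in Vmain -> u != v ->
         u' \in Vmain -> v' \in Vmain -> u' != v' ->
         x \in f u v -> x \in f u' v' ->
         (u = u' /\ v = v') \/ (u = v' /\ v = u')) /\
      (forall x, x \in Vmain \/
         exists u v, [/\ u \in Vmain, v \in Vmain, u != v & x \in f u v]) /\
      (forall x y, e x y <->
         exists u v, [/\ u \in Vmain, v \in Vmain, u != v & path_edge u v (f u v) x y]) /\
      k = \max_(u in Vmain) \max_(v in Vmain | v != u) size (f u v).

Definition is_tree (m : nat) (t : rel 'I_m) : Prop :=
  [/\ 0 < m, symmetric t, irreflexive t,
      (forall i j, connect t i j) &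
      (forall c : seq 'I_m, uniq c -> 3 <= size c -> ~~ cycle t c)].

Definition tree_decomposition (T : finType) (e : rel T)
    (m : nat) (t : rel 'I_m) (B : 'I_m -> {set T}) : Prop :=
  [/\ is_tree t,
      (forall x, exists i, x \in B i),
      (forall x y, e x y -> exists i, x \in B i /\ y \in B i) &
      (forall x i j, x \in B i -> x \in B j ->
         connect [rel a b | [&& t a b, x \in B a & x \in B b]] i j)].

Definition td_width (T : finType) (m : nat) (B : 'I_m -> {set T}) : nat :=
  (\max_(i < m) #|B i|) - 1.

Definition treewidth_eq (T : finType) (e : rel T) (w : nat) : Prop :=
  (exists m (t : rel 'I_m) (B : 'I_m -> {set T}),
      tree_decomposition e t B /\ td_width B = w) /\
  (forall m (t : rel 'I_m) (B : 'I_m -> {set T}),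
      tree_decomposition e t B -> w <= td_width B).

(* Main.v *)
Require Import Defs.
From mathcomp Require Import all_boot.
Set Implicit Arguments. Unset Strict Implicit. Unset Printing Implicit Defensive.


Definition rm (Y : finType) (t : rel Y) (i : Y) : rel Y :=
  [rel a b | [&& t a b, a != i & b != i]].

Lemma rm_sym (Y : finType) (t : rel Y) i : symmetric t -> symmetric (rm t i).
Proof. move=> st a b; rewrite /rm /= (st a b); by case: (t b a); case: (a != i); case: (b != i). Qed.

Lemma path_rm (Y : finType) (t : rel Y) i x s :
  path t x s -> i \notin x :: s -> path (rm t i) x s.
Proof.
elim: s x => [//|y s IH] x /= /andP[txy ps]; rewrite !inE negb_or => /andP[xi].
rewrite negb_or => /andP[yi ns]; rewrite /= {1}/rm /= txy eq_sym xi eq_sym yi /=.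
by apply: IH => //; rewrite inE negb_or yi.
Qed.

Lemma connect_rm_ne (Y : finType) (t : rel Y) i a z :
  connect (rm t i) a z -> a != i -> z != i.
Proof.
move=> /connectP[p pp ->]; elim: p a pp => [//|y p IH] a /= /andP[/and3P[_ _ yi] pp] _.
exact: IH.
Qed.

Section Tree.
Variables (Y : finType) (t : rel Y).
Hypothesis (st : symmetric t) (it : irreflexive t)
  (ct : forall i j, connect t i j)
  (at_ : forall c : seq Y, uniq c -> 3 <= size c -> ~~ cycle t c).

Lemma treeK i a b : t i a -> t i b -> a != b -> connect (rm t i) a b -> False.
Proof.
move=> tia tib ab /connectP[p pp lp]; subst b; move: tib ab.
case: (shortenP pp) => s ps us _ tib ab.
have ai : a != i by apply: contraTneq tia => ->; rewrite it.
have ni : i \notin a :: s.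
  rewrite inE negb_or eq_sym ai /=; apply/negP => iS.
  have : forall z, z \in s -> z != i.
    move=> z zs; apply: (connect_rm_ne _ ai).
    by apply: (path_connect ps); rewrite inE zs orbT.
  by move=> /(_ i iS); rewrite eqxx.
have sne : s != [::] by apply: contraNneq ab => se; rewrite se.
apply: (negP (at_ (c := i :: a :: s) _ _)).
- by rewrite /= ni; exact: us.
- by case: s sne {ps us ni tib ab} => //= ? ?; rewrite !ltnS.
rewrite /cycle /= tia /= rcons_path.
rewrite (st (last a s)) tib andbT.
by apply: sub_path ps => x y /and3P[].
Qed.

Lemma through (r : rel Y) i j p :
  subrel r t -> t i j -> connect (rm t i) j p -> connect r i p -> r i j.
Proof.
move=> sr tij rjp /connectP[q pq lq].
have ji : j != i by apply: contraTneq tij => ->; rewrite it.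
have pi : p != i := connect_rm_ne rjp ji.
subst p; move: rjp pi; case: (shortenP pq) => s ps us _.
case: s ps us => [|x s] /=; first by move=> _ _ _; rewrite eqxx.
move=> /andP[rix ps] /andP[ni us] rjp pi.
have rxp : connect (rm t i) x (last x s).
  by apply/connectP; exists s => //; apply: path_rm => //; apply: sub_path ps => a b /sr.
case: (eqVneq x j) => [<- //|xj].
exfalso; apply: (treeK (sr _ _ rix) tij xj).
apply: (connect_trans rxp); rewrite (sym_connect_sym (rm_sym (t:=t) i st)); exact: rjp.
Qed.

Definition tS (S : pred Y) : rel Y := [rel a b | [&& t a b, S a & S b]].
Definition sconn (S : pred Y) := forall x y, S x -> S y -> connect (tS S) x y.

Lemma comp (S : pred Y) i j p :
  sconn S -> ~~ S i -> S p -> connect (rm t i) j p ->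
  forall y, S y -> connect (rm t i) j y.
Proof.
move=> cS Si Sp rjp y Sy; apply: (connect_trans rjp).
apply: connect_sub (cS _ _ Sp Sy) => a b /and3P[tab Sa Sb]; apply: connect1.
rewrite /rm /= tab /=; apply/andP; split; [by apply: contraNneq Si => <- | by apply: contraNneq Si => <-].
Qed.

Lemma dir i q : q != i -> exists2 j, t i j & connect (rm t i) j q.
Proof.
move=> qi; case/connectP: (ct i q) => p pp lp.
subst q; move: qi; case: (shortenP pp) => s ps us _.
case: s ps us => [|x s] /=; first by rewrite eqxx.
move=> /andP[tix ps] /andP[ni _] qi; exists x => //.
by apply/connectP; exists s => //; apply: path_rm.
Qed.

Lemma connect_restrict (r : rel Y) (P : pred Y) a y :
  connect r a y -> (forall z, connect r a z -> P z) ->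
  connect [rel x z | [&& r x z, P x & P z]] a y.
Proof.
move=> /connectP[p pp ->] H; apply/connectP; exists p => //.
have Hall : all P (a :: p) by apply/allP => z /(path_connect pp) /H.
apply: (sub_in_path (P := P)) Hall pp.
by move=> x z Px Pz rxz; rewrite /= rxz; rewrite -!topredE /= in Px Pz; rewrite Px Pz.
Qed.

Variables (I : finType) (A : {set I}) (S : I -> pred Y).
Hypothesis (cS : forall u, u \in A -> sconn (S u))
  (pS : forall u v, u \in A -> v \in A -> exists2 y, S u y & S v y).

Definition R i j := [set y | connect (rm t i) j y].

Lemma helly_step N : forall i j, #|R i j| <= N -> t i j ->
  (forall u, u \in A -> ~~ S u i -> forall y, S u y -> y \in R i j) ->
  (exists2 u, u \in A & ~~ S u i) ->
  exists c, forall u, u \in A -> S u c.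
Proof.
elim: N => [|N IH] i j.
  have : j \in R i j by rewrite inE connect0.
  by move=> jR; rewrite leqn0 => /eqP/card0_eq/(_ j); rewrite jR.
move=> cR tij inv [u0 u0A u0i].
case: (boolP [forall u in A, S u j]) => [/forall_inP H|]; first by exists j.
rewrite negb_forall_in => /existsP[w /andP[wA wj]].
have ji : j != i by apply: contraTneq tij => ->; rewrite it.
have mi : forall u, u \in A -> ~~ S u j -> ~~ S u i.
  move=> u uA uj; apply/negP => ui.
  case: (pS uA u0A) => p Sup Su0p.
  have pR := inv _ u0A u0i _ Su0p; rewrite inE in pR.
  suff : tS (S u) i j by move=> /and3P[_ _]; rewrite (negbTE uj).
  apply: (through (r := tS (S u)) (p := p) _ tij pR); first by move=> a b /and3P[].
  exact: cS.
case: (pS wA wA) => q Swq _.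
have qj : q != j by apply: contraNneq wj => <-.
case: (dir qj) => j' tjj' Rq.
have j'i : j' != i.
  apply/negP => /eqP e; subst j'.
  have := inv _ wA (mi _ wA wj) _ Swq; rewrite inE => Rq'.
  have : rm t j i j.
    by apply: (through (r := rm t j) (p := q) _ tij Rq' Rq) => a b /and3P[].
  by rewrite /rm /= eqxx !andbF.
apply: (IH j j') => //; last by exists w.
- rewrite -ltnS; apply: leq_trans cR; apply: proper_card; apply/properP; split.
    apply/subsetP => y; rewrite !inE => Ry.
    have H : connect [rel x z | [&& rm t j x z, x != i & z != i]] j' y.
      apply: connect_restrict Ry _ => z Rz; apply/negP => /eqP e; subst z.
      have tji : t j i by rewrite st.
      exact: (treeK tjj' tji j'i Rz).
    apply: (connect_trans (connect1 (e := rm t i) _)) (connect_sub _ H).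
      by rewrite /rm /= tjj' ji j'i.
    by move=> a b /and3P[/and3P[tab _ _] ai bi]; apply: connect1; rewrite /rm /= tab ai bi.
  exists j; first by rewrite inE connect0.
  have j'j : j' != j by apply: contraTneq tjj' => ->; rewrite it.
  by rewrite inE; apply/negP => /connect_rm_ne /(_ j'j); rewrite eqxx.
- move=> u uA uj y Suy; rewrite inE.
  case: (pS uA wA) => p Sup Swp.
  have Rwq : forall z, S w z -> connect (rm t j) j' z.
    exact: (comp (cS wA) wj Swq Rq).
  exact: (comp (cS uA) uj Sup (Rwq _ Swp)).
Qed.

Lemma helly (i0 : Y) : exists c, forall u, u \in A -> S u c.
Proof.
case: (boolP [forall u in A, S u i0]) => [/forall_inP H|]; first by exists i0.
rewrite negb_forall_in => /existsP[u /andP[uA ui]].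
case: (pS uA uA) => q Suq _.
have qi : q != i0 by apply: contraNneq ui => <-.
case: (dir qi) => j tij Rq.
apply: (helly_step (N := #|R i0 j|) (j := j)) => //; last by exists u.
move=> w wA wi y Swy; rewrite inE.
case: (pS wA uA) => p Swp Sup.
have Ru := comp (cS uA) ui Suq Rq.
exact: (comp (cS wA) wi Swp (Ru _ Sup)).
Qed.
End Tree.


Section PTree.
Variables (X : finType) (par : X -> X) (root : X) (h : X -> nat).
Hypothesis hpar : forall x, x != root -> h (par x) < h x.

Definition ptree : rel X :=
  [rel a b | ((a == par b) && (b != root)) || ((b == par a) && (a != root))].

Lemma ptree_sym : symmetric ptree.
Proof. by move=> a b; rewrite /ptree /= orbC. Qed.

Lemma ptree_irr : irreflexive ptree.
Proof.
move=> a; rewrite /ptree /= orbb; apply/negP => /andP[/eqP e ar].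
by have := hpar ar; rewrite -e ltnn.
Qed.

Lemma ptree_root x : connect ptree x root.
Proof.
elim: {x}(h x) {-2}x (leqnn (h x)) => [|N IH] x hx.
  case: (eqVneq x root) => [->|xr]; first exact: connect0.
  by have := hpar xr; rewrite ltnNge (leq_trans hx (leq0n _)).
case: (eqVneq x root) => [->|xr]; first exact: connect0.
apply: (connect_trans (connect1 (_ : ptree x (par x)))).
  by rewrite /ptree /= eqxx xr orbT.
apply: IH; rewrite -ltnS; exact: leq_trans (hpar xr) hx.
Qed.

Lemma ptree_conn x y : connect ptree x y.
Proof.
apply: connect_trans (ptree_root x) _.
by rewrite (sym_connect_sym ptree_sym); exact: ptree_root.
Qed.

Lemma seq_max (c : seq X) : c != [::] -> exists2 x, x \in c & forall w, w \in c -> h w <= h x.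
Proof.
elim: c => [//|y c IH] _.
case: (eqVneq c [::]) => [->|cne].
  by exists y; rewrite ?inE // => w; rewrite inE => /eqP->.
case: (IH cne) => x xc Hx.
case: (leqP (h y) (h x)) => hyx.
  by exists x; rewrite ?inE ?xc ?orbT // => w; rewrite inE => /orP[/eqP->|/Hx].
exists y; rewrite ?inE ?eqxx // => w; rewrite inE => /orP[/eqP->//|/Hx hw].
exact: leq_trans hw (ltnW hyx).
Qed.

Lemma ptree_acyc (c : seq X) : uniq c -> 3 <= size c -> ~~ cycle ptree c.
Proof.
move=> uc sc; apply/negP => cc.
have cne : c != [::] by case: c sc {uc cc}.
case: (seq_max cne) => x xc Hx.
set c' := rot (index x c) c.
have : uniq c' by rewrite rot_uniq.
have : cycle ptree c' by rewrite rot_cycle.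
have : 3 <= size c' by rewrite size_rot.
have : forall w, w \in c' -> h w <= h x by move=> w; rewrite mem_rot; exact: Hx.
have : head x c' = x.
  by rewrite /c' /rot (drop_nth x) ?index_mem //= nth_index.
case: c' => [//|x0 [//|y [//|z rest]]] /= -> Hm _.
move=> /andP[pxy]; rewrite rcons_path => /andP[_ /andP[_ plast]].
move=> /and4P[_ yn _ _].
have yz : y \notin rest by move: yn; rewrite inE negb_or => /andP[].
have Pn : forall w, w \in [:: x, y, z & rest] -> ptree x w -> w = par x.
  move=> w wc; rewrite /ptree /= => /orP[/andP[/eqP e wr]|/andP[/eqP e _]] //.
  by have := hpar wr; rewrite -e ltnNge Hm.
have yc : y \in [:: x, y, z & rest] by rewrite !inE eqxx orbT.
have e1 := Pn y yc pxy.
have lz : last z rest \in [:: x, y, z & rest].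
  by rewrite inE; apply/orP; right; rewrite inE; apply/orP; right; exact: mem_last.
have pl : ptree x (last z rest) by rewrite ptree_sym.
have e2 := Pn _ lz pl.
have : y != last z rest.
  apply: contraNneq yn => ->; exact: (mem_last z rest).
by rewrite e1 e2 eqxx.
Qed.
End PTree.

Lemma is_tree_transfer (X : finType) (r : rel X) :
  0 < #|X| -> symmetric r -> irreflexive r -> (forall x y, connect r x y) ->
  (forall c : seq X, uniq c -> 3 <= size c -> ~~ cycle r c) ->
  is_tree (m := #|X|) (relpre enum_val r).
Proof.
move=> X0 sr ir cr ar; split => //.
- by move=> i j /=; rewrite sr.
- by move=> i /=; rewrite ir.
- move=> i j; case/connectP: (cr (enum_val i) (enum_val j)) => p pp lp.
  apply/connectP; exists (map enum_rank p).
    rewrite -(enum_valK i) path_map; apply: sub_path pp => a b /=.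
    by rewrite !enum_rankK.
  by rewrite -(enum_valK i) last_map -lp enum_valK.
- move=> c uc sc; apply/negP => cc.
  apply: (negP (ar (map enum_val c) _ _)).
  + by rewrite map_inj_uniq //; exact: enum_val_inj.
  + by rewrite size_map.
  case: c cc {uc sc} => [//|a c] /=.
  by rewrite -map_rcons path_map.
Qed.

Lemma connect_transfer (X : finType) (r : rel X) x y :
  connect r x y -> connect (relpre enum_val r) (enum_rank x) (enum_rank y).
Proof.
case/connectP => p pp lp; apply/connectP; exists (map enum_rank p).
  rewrite path_map; apply: sub_path pp => a b /=; by rewrite !enum_rankK.
by rewrite last_map -lp.
Qed.


Lemma path_zip (T : eqType) (x : T) q : path (fun a b => (a, b) \in zip (x :: q) q) x q.
Proof.
elim: q x => [//|y q IH] x /=; rewrite inE eqxx /=.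
by apply: sub_path (IH y) => a b /= H; rewrite inE H orbT.
Qed.

Definition rk (T : finType) (x : T) : nat := enum_rank x.

Lemma rk_inj (T : finType) : injective (@rk T).
Proof. by move=> x y /ord_inj /enum_rank_inj. Qed.

Section PC.
Variables (T : finType) (e : rel T) (Vm : {set T}) (f : T -> T -> seq T).
Hypothesis (se : symmetric e).
Hypothesis Huniq : forall u v, u \in Vm -> v \in Vm -> u != v ->
         uniq (f u v) /\ (forall x, x \in f u v -> x \notin Vm).
Hypothesis Hdisj : forall u v u' v' x, u \in Vm -> v \in Vm -> u != v ->
         u' \in Vm -> v' \in Vm -> u' != v' ->
         x \in f u v -> x \in f u' v' ->
         (u = u' /\ v = v') \/ (u = v' /\ v = u').
Hypothesis Hedge : forall x y, e x y <->
         exists u v, [/\ u \in Vm, v \in Vm, u != v & path_edge u v (f u v) x y].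

Lemma epath u v : u \in Vm -> v \in Vm -> u != v -> path e u (rcons (f u v) v).
Proof.
move=> uV vV uv; apply: sub_path (path_zip u (rcons (f u v) v)) => a b H.
by apply/Hedge; exists u, v; split.
Qed.

Definition C u : {set T} :=
  u |: \bigcup_(v in Vm | rk u < rk v) [set x | x \in f u v].

Lemma memC x u : reflect (x = u \/ exists2 v, (v \in Vm) && (rk u < rk v) & x \in f u v) (x \in C u).
Proof.
apply: (iffP setU1P) => [[->|/bigcupP[v vP]]|[->|[v vP xf]]]; [by left|
  by rewrite inE => xf; right; exists v|by left|].
by right; apply/bigcupP; exists v; rewrite ?inE.
Qed.

Lemma rk_neq (u v : T) : rk u < rk v -> u != v.
Proof. by apply: contraTneq => ->; rewrite ltnn. Qed.

Lemma C_disj u w x : u \in Vm -> w \in Vm -> u != w -> x \in C u -> x \in C w -> False.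
Proof.
move=> uV wV uw /memC[->|[v /andP[vV ruv] xf]] /memC[e1|[v' /andP[v'V rwv] xf']].
- by rewrite e1 eqxx in uw.
- by have := (Huniq wV v'V (rk_neq rwv)).2 _ xf'; rewrite uV.
- by have := (Huniq uV vV (rk_neq ruv)).2 _ xf; rewrite e1 wV.
case: (Hdisj uV vV (rk_neq ruv) wV v'V (rk_neq rwv) xf xf') => [[e1 _]|[e1 e2]].
  by rewrite e1 eqxx in uw.
by subst; have := ltn_trans ruv rwv; rewrite ltnn.
Qed.

Lemma C_adj u w : u \in Vm -> w \in Vm -> u != w ->
  exists x y, [/\ x \in C u, y \in C w & e x y].
Proof.
wlog ruw : u w / rk u < rk w.
  move=> H uV wV uw; case: (ltngtP (rk u) (rk w)) => [r|r|r].
  - exact: H.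
  - have [x [y [xw yu exy]]] := H w u r wV uV (rk_neq r).
    by exists y, x; split => //; rewrite se.
  - by rewrite (rk_inj r) eqxx in uw.
move=> uV wV uw.
exists (last u (f u w)), w; split.
- case E: (f u w) => [|y p] /=; first by apply/memC; left.
  by apply/memC; right; exists w; rewrite ?wV ?ruw // E; exact: mem_last.
- by apply/memC; left.
have := epath uV wV uw; rewrite rcons_path => /andP[_ //].
Qed.

Definition eC u : rel T := [rel a b | [&& e a b, a \in C u & b \in C u]].

Lemma C_conn u x : u \in Vm -> x \in C u -> connect (eC u) u x.
Proof.
move=> uV /memC[->|[v /andP[vV ruv] xf]]; first exact: connect0.
have p := epath uV vV (rk_neq ruv); rewrite rcons_path in p; case/andP: p => p _.
have Hall : all (mem (C u)) (u :: f u v).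
  apply/allP => z; rewrite inE => /orP[/eqP->|zf]; apply/memC; [by left|right].
  by exists v; rewrite ?vV ?ruv.
have p' : path (eC u) u (f u v).
  apply: (sub_in_path (P := mem (C u))) Hall p => a b Ha Hb eab.
  by rewrite /eC /= eab /=; apply/andP; split; [exact: Ha | exact: Hb].
by apply: (path_connect p'); rewrite inE xf orbT.
Qed.

Lemma eC_sym u : symmetric (eC u).
Proof. by move=> a b; rewrite /eC /= se; case: (e b a); case: (a \in C u); case: (b \in C u). Qed.

Variables (m : nat) (t : rel 'I_m) (B : 'I_m -> {set T}).
Hypothesis td : tree_decomposition e t B.

Definition Sf u : pred 'I_m := fun i => [exists x, (x \in C u) && (x \in B i)].

Lemma ri_conn u x i j : x \in C u -> x \in B i -> x \in B j -> connect (tS t (Sf u)) i j.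
Proof.
case: td => _ _ _ RI xC xi xj.
apply: connect_sub (RI x i j xi xj) => a b /and3P[tab xa xb]; apply: connect1.
rewrite /tS /= tab /= /Sf; apply/andP; split; apply/existsP; exists x; by rewrite xC.
Qed.

Lemma bag_path u p : forall x, path (eC u) x p -> x \in C u -> forall i j,
  x \in B i -> last x p \in B j -> connect (tS t (Sf u)) i j.
Proof.
elim: p => [|y p IH] x /=; first by move=> _ xC i j; exact: ri_conn.
move=> /andP[/and3P[exy _ yC] pp] xC i j xi lj.
case: td => _ _ EC _; case: (EC x y exy) => l [xl yl].
apply: connect_trans (ri_conn xC xi xl) (IH y pp yC l j yl lj).
Qed.

Lemma Sf_conn u : u \in Vm -> sconn t (Sf u).
Proof.
move=> uV i j /existsP[x /andP[xC xi]] /existsP[y /andP[yC yj]].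
have cxy : connect (eC u) x y.
  apply: connect_trans (C_conn uV yC).
  by rewrite (sym_connect_sym (eC_sym u)); exact: C_conn.
case/connectP: cxy => p pp lp; apply: (bag_path pp xC xi); by rewrite -lp.
Qed.

Lemma Sf_pair u w : u \in Vm -> w \in Vm -> exists2 i, Sf u i & Sf w i.
Proof.
move=> uV wV; case: td => _ cov EC _.
case: (eqVneq u w) => [<-|uw].
  case: (cov u) => i ui; exists i; apply/existsP; exists u; rewrite ui andbT; apply/memC; by left.
case: (C_adj uV wV uw) => x [y [xC yC exy]]; case: (EC x y exy) => i [xi yi].
by exists i; apply/existsP; [exists x; rewrite xC | exists y; rewrite yC].
Qed.

Lemma lower : #|Vm| <= \max_(i < m) #|B i|.
Proof.
have td' := td; case: td' => [[m0 st it ct at_] _ _ _].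
have [c Hc] := helly st it ct at_ (A := Vm) (S := Sf) Sf_conn Sf_pair (Ordinal m0).
pose g u := odflt u [pick x | (x \in C u) && (x \in B c)].
have gP : forall u, u \in Vm -> (g u \in C u) && (g u \in B c).
  move=> u uV; rewrite /g; case: pickP => [x //|H].
  by case/existsP: (Hc u uV) => x; rewrite H.
apply: leq_trans (leq_bigmax c).
rewrite -(card_in_imset (f := g)); last first.
  move=> u w uV wV guw; apply/eqP; apply/negPn/negP => uw.
  case/andP: (gP u uV) => gu _; case/andP: (gP w wV) => gw _.
  by apply: (C_disj uV wV uw gu); rewrite guw.
apply: subset_leq_card; apply/subsetP => y /imsetP[u uV ->].
by case/andP: (gP u uV).
Qed.
End PC.


Lemma zip_nth (T : eqType) (x0 : T) (s : seq T) x y :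
  (x, y) \in zip s (behead s) ->
  exists k, [/\ k.+1 < size s, x = nth x0 s k & y = nth x0 s k.+1].
Proof.
elim: s => [//|a s IH]; case: s IH => [//|b s] IH /=.
rewrite inE => /orP[/eqP[-> ->]|H]; first by exists 0.
by case: (IH H) => k [k1 -> ->]; exists k.+1.
Qed.

Definition ordpred n (k : 'I_n) : 'I_n := Ordinal (leq_ltn_trans (leq_pred k) (ltn_ord k)).

Section Up.
Variables (T : finType) (e : rel T) (Vm : {set T}) (f : T -> T -> seq T).
Hypothesis (se : symmetric e).
Hypothesis Hrev : forall u v, u \in Vm -> v \in Vm -> u != v -> f v u = rev (f u v).
Hypothesis Huniq : forall u v, u \in Vm -> v \in Vm -> u != v ->
         uniq (f u v) /\ (forall x, x \in f u v -> x \notin Vm).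
Hypothesis Hdisj : forall u v u' v' x, u \in Vm -> v \in Vm -> u != v ->
         u' \in Vm -> v' \in Vm -> u' != v' ->
         x \in f u v -> x \in f u' v' ->
         (u = u' /\ v = v') \/ (u = v' /\ v = u').
Hypothesis Hcov : forall x, x \in Vm \/
         exists u v, [/\ u \in Vm, v \in Vm, u != v & x \in f u v].
Hypothesis Hedge : forall x y, e x y <->
         exists u v, [/\ u \in Vm, v \in Vm, u != v & path_edge u v (f u v) x y].

Definition X := option (T * T * 'I_#|T|).
Definition valid (u v : T) (k : nat) := [&& u \in Vm, v \in Vm, rk u < rk v & k < size (f u v)].
Definition sq u v := u :: rcons (f u v) v.
Definition bagX (a : X) : {set T} :=
  match a with
  | None => Vm
  | Some (u, v, k) => if valid u v k then [set nth u (sq u v) k; nth u (sq u v) k.+1; v] else set0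
  end.
Definition parX (a : X) : X :=
  match a with
  | None => None
  | Some (u, v, k) => if valid u v k && (0 < k) then Some (u, v, ordpred k) else None
  end.
Definition hX (a : X) : nat := match a with None => 0 | Some (_, _, k) => k.+1 end.

Lemma hparX a : a != None -> hX (parX a) < hX a.
Proof.
case: a => [[[u v] k]|//] _ /=; case: ifP => // /andP[_ k0] /=.
by rewrite ltnS /= ; case: (nat_of_ord k) k0.
Qed.

Lemma validN u v k : valid u v k -> k < #|T|.
Proof.
case/and4P => uV vV ruv kp; apply: leq_trans kp _.
have [us _] := Huniq uV vV (rk_neq ruv).
by rewrite -(card_uniqP us); exact: max_card.
Qed.

Lemma sq_in u v k : k < size (f u v) -> nth u (sq u v) k.+1 = nth u (f u v) k.
Proof. by move=> kp; rewrite /sq /= nth_rcons kp. Qed.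

Lemma sq_last u v : nth u (sq u v) (size (f u v)).+1 = v.
Proof. by rewrite /sq /= nth_rcons ltnn eqxx. Qed.

Lemma bag_card a : #|bagX a| <= maxn #|Vm| 3.
Proof.
case: a => [[[u v] k]|] /=; last exact: leq_maxl.
case: ifP => _; last by rewrite cards0.
apply: leq_trans (leq_maxr _ _).
set l := [:: nth u (sq u v) k; nth u (sq u v) k.+1; v].
apply: (@leq_trans #|l|); last exact: card_size.
apply: subset_leq_card; apply/subsetP => z; rewrite !inE -orbA; done.
Qed.

Lemma cons_pair u v k : u \in Vm -> v \in Vm -> rk u < rk v -> k.+1 < size (sq u v) ->
  exists a, nth u (sq u v) k \in bagX a /\ nth u (sq u v) k.+1 \in bagX a.
Proof.
move=> uV vV ruv; rewrite /= size_rcons !ltnS => kp.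
case: (ltngtP k (size (f u v))) kp => // [klt|keq] _.
  have vk : valid u v k by rewrite /valid uV vV ruv klt.
  exists (Some (u, v, Ordinal (validN vk))); rewrite /= vk !inE !eqxx /=.
  by rewrite orbT.
case: k keq => [|k] keq.
  exists None; rewrite /= nth_rcons -keq /=; split => //.
have vk : valid u v k by rewrite /valid uV vV ruv -keq ltnSn.
exists (Some (u, v, Ordinal (validN vk))); rewrite /bagX vk /=.
split; rewrite !inE; first by rewrite eqxx !(orbT, orTb).
by rewrite (nth_rcons _ _ _ k.+1) keq ltnn !eqxx !(orbT, orTb).
Qed.

Lemma edge_cov x y : e x y -> exists a, x \in bagX a /\ y \in bagX a.
Proof.
case/Hedge => u [v [uV vV uv pe]].
case/(zip_nth u): pe => k [ks -> ->].
case: (ltngtP (rk u) (rk v)) => [r|r|r]; last by rewrite (rk_inj r) eqxx in uv.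
  by have := cons_pair uV vV r ks; rewrite /sq.
have Es : u :: rcons (f u v) v = rev (sq v u).
  by rewrite /sq rev_cons rev_rcons (Hrev vV uV) ?rev_cons ?revK // eq_sym.
move: ks; rewrite Es size_rev => ks.
rewrite (nth_rev _ (ltnW ks)) (nth_rev _ ks).
have Hj : (size (sq v u) - k.+2).+1 = size (sq v u) - k.+1.
  by rewrite -subSn.
have ks' : (size (sq v u) - k.+2).+1 < size (sq v u).
  by rewrite Hj; rewrite ltn_subrL.
have [a [H1 H2]] := cons_pair vV uV r ks'.
exists a; rewrite -Hj.
rewrite (set_nth_default v u ks') (set_nth_default v u (ltnW ks')).
by split.
Qed.

Lemma node_of x : x \notin Vm -> exists u v,
  [/\ u \in Vm, v \in Vm, rk u < rk v & x \in f u v].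
Proof.
move=> xV; case: (Hcov x) => [xV'|[u [v [uV vV uv xf]]]]; first by rewrite xV' in xV.
case: (ltngtP (rk u) (rk v)) => [r|r|r]; last by rewrite (rk_inj r) eqxx in uv.
  by exists u, v.
exists v, u; split => //; by rewrite (Hrev uV vV uv) mem_rev.
Qed.

Lemma bag_cover x : exists a, x \in bagX a.
Proof.
case: (boolP (x \in Vm)) => [xV|xV]; first by exists None.
case: (node_of xV) => u [v [uV vV ruv xf]].
have vk : valid u v (index x (f u v)) by rewrite /valid uV vV ruv index_mem.
exists (Some (u, v, Ordinal (validN vk))); rewrite /bagX vk /= !inE.
by rewrite (nth_rcons _ _ _ (index x (f u v))) index_mem xf nth_index // eqxx !(orbT, orTb).
Qed.

Lemma bag_some u v (k : 'I_#|T|) x : x \in bagX (Some (u, v, k)) ->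
  valid u v k /\ [\/ x = nth u (sq u v) k, x = nth u (f u v) k | x = v].
Proof.
rewrite /bagX; case: ifP => vk; last by rewrite inE.
move=> xin; split => //; move: xin; rewrite !inE -orbA => /or3P[/eqP->|/eqP->|/eqP->].
- by apply: Or31.
- by apply: Or32; rewrite (sq_in (k := k)) //; case/and4P: vk.
- by apply: Or33.
Qed.

Lemma valid_pred u v k : valid u v k -> valid u v k.-1.
Proof. by case/and4P => *; rewrite /valid; apply/and4P; split => //; apply: leq_ltn_trans (leq_pred _) _. Qed.

Lemma notmain u v k : valid u v k -> nth u (f u v) k \notin Vm.
Proof.
case/and4P => uV vV ruv kp; apply: (Huniq uV vV (rk_neq ruv)).2.
exact: mem_nth.
Qed.

Lemma root_of x : exists2 r, x \in bagX r & forall a, x \in bagX a -> a != r ->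
  a != None /\ x \in bagX (parX a).
Proof.
case: (boolP (x \in Vm)) => [xV|xV].
  exists None => // -[[[u v] k]|] //= xa _; split => //.
  case: (bag_some xa) => vk [xe|xe|xe].
  - rewrite vk; case: (posnP k) => [k0|k0] //=.
    rewrite /bagX /= (valid_pred vk) !inE xe; apply/orP; left; apply/orP; right.
    by rewrite /sq /=; move: k0; case: (nat_of_ord k).
  - by move: (notmain vk); rewrite -xe xV.
  - rewrite vk; case: (posnP k) => [k0|k0] //=.
    by rewrite /bagX /= (valid_pred vk) !inE xe eqxx !orbT.
case: (node_of xV) => u [v [uV vV ruv xf]].
have us := (Huniq uV vV (rk_neq ruv)).1.
have vk : valid u v (index x (f u v)) by rewrite /valid uV vV ruv index_mem.
set r : X := Some (u, v, Ordinal (validN vk)).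
have xr : x \in bagX r.
  rewrite /r /bagX /= vk /= !inE.
  by rewrite (nth_rcons _ _ _ (index x (f u v))) index_mem xf nth_index // eqxx !(orbT, orTb).
exists r => // -[[[u' v'] k]|] /=; last by move=> xa; rewrite xa in xV.
move=> xa ar; split => //.
have same : forall j, valid u' v' j -> x = nth u' (f u' v') j ->
    u' = u /\ v' = v /\ j = index x (f u v).
  move=> j vj xj; case/and4P: (vj) => u'V v'V ru'v' jp.
  have xf' : x \in f u' v' by rewrite xj mem_nth.
  case: (Hdisj uV vV (rk_neq ruv) u'V v'V (rk_neq ru'v') xf xf') => [[e1 e2]|[e1 e2]].
    subst u' v'; split => //; split => //; by rewrite xj index_uniq.
  by subst; have := ltn_trans ruv ru'v'; rewrite ltnn.
case: (bag_some xa) => vk' [xe|xe|xe].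
- move: xe; case E: (nat_of_ord k) => [|k'] xe.
    by move: xV; rewrite xe /sq /= => /negP; case/and4P: vk'.
  have vk'' : valid u' v' k' by rewrite -[k']/(k'.+1.-1) -E; exact: valid_pred.
  rewrite /sq /= nth_rcons in xe.
  move: xe; case/and4P: (vk'') => _ _ _ k'p; rewrite k'p => xe.
  have [e1 [e2 e3]] := same _ vk'' xe; subst u' v'.
  have vk1 : valid u v k'.+1 by rewrite -E.
  rewrite vk1 /= E /= vk'' !inE (nth_rcons _ _ _ k') k'p -xe.
  by rewrite eqxx !(orbT, orTb).
- case/and4P: (vk') => _ _ _ kp.
  have [e1 [e2 e3]] := same _ vk' xe; subst u' v'.
  have : Some (u, v, k) = r by congr (Some (_, _, _)); apply: val_inj.
  by move=> E; rewrite E eqxx in ar.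
- by case/and4P: vk' => _ v'V _ _; move: xV; rewrite xe v'V.
Qed.
End Up.


Lemma ptree_to_r (X : finType) (par : X -> X) (root : X) (h : X -> nat)
  (hpar : forall x, x != root -> h (par x) < h x) (P : pred X) r :
  (forall a, P a -> a != r -> a != root /\ P (par a)) ->
  forall a, P a -> connect [rel a b | [&& ptree par root a b, P a & P b]] a r.
Proof.
move=> H a; elim: {a}(h a) {-2}a (leqnn (h a)) => [|N IH] a ha Pa.
  case: (eqVneq a r) => [->|ar]; first exact: connect0.
  have [aroot _] := H a Pa ar.
  by have := hpar _ aroot; rewrite ltnNge (leq_trans ha (leq0n _)).
case: (eqVneq a r) => [->|ar]; first exact: connect0.
have [aroot Pp] := H a Pa ar.
apply: (@connect_trans _ _ (par a)).
  by apply: connect1; rewrite /= /ptree /= eqxx aroot orbT Pa Pp.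
apply: IH Pp; rewrite -ltnS; exact: leq_trans (hpar _ aroot) ha.
Qed.

Unset Implicit Arguments.

Theorem theorem8 (T : finType) (e : rel T) (n k : nat) :
  symmetric e -> irreflexive e ->
  pseudo_clique e n k -> 3 <= n ->
  treewidth_eq e (n - 1).
Proof.
move=> se ie [Vm [f [cV [Hrev [Huniq [Hdisj [Hcov [Hedge _]]]]]]]] n3.
split; last first.
  move=> m t B td; rewrite /td_width; apply: leq_sub2r; rewrite -cV.
  exact: (lower se Huniq Hdisj Hedge td).
pose par := @parX T Vm f.
pose tX := ptree par None.
have hp := @hparX T Vm f.
exists #|{: option (T * T * 'I_#|T|)}|, (relpre enum_val tX), (fun i => bagX Vm f (enum_val i)); split.
  split.
  - apply: is_tree_transfer.
    + by apply/card_gt0P; exists None.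
    + exact: ptree_sym.
    + exact: ptree_irr hp.
    + exact: ptree_conn hp.
    + exact: ptree_acyc hp.
  - move=> x; case: (bag_cover Hrev Huniq Hcov x) => a xa; exists (enum_rank a).
    by rewrite enum_rankK.
  - move=> x y exy; case: (edge_cov Hrev Huniq Hedge exy) => a [xa ya].
    by exists (enum_rank a); rewrite enum_rankK.
  - move=> x i j xi xj.
    case: (root_of Hrev Huniq Hdisj Hcov x) => r xr Hr.
    have C1 := ptree_to_r hp Hr xi.
    have C2 := ptree_to_r hp Hr xj.
    have Hc : connect [rel a b | [&& tX a b, x \in bagX Vm f a & x \in bagX Vm f b]]
                (enum_val i) (enum_val j).
      apply: connect_trans C1 _.
      rewrite (sym_connect_sym _); first exact: C2.
      move=> a b /=; rewrite (ptree_sym par None a b).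
      by case: (ptree _ _ b a); case: (x \in _); case: (x \in _).
    have := connect_transfer Hc; rewrite !enum_valK.
    apply: connect_sub => a b H; apply: connect1; exact: H.
rewrite /td_width; congr (_ - 1); apply/eqP; rewrite eqn_leq; apply/andP; split.
  apply/bigmax_leqP => i _; apply: leq_trans (bag_card Vm f _) _.
  by rewrite cV geq_max leqnn n3.
by rewrite -cV; apply: leq_trans (leq_bigmax (enum_rank (None : option (T * T * 'I_#|T|)))); rewrite enum_rankK.
Qed.
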